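(* Let $k \geq \ell \geq 2$, $k \geq 3$, $n > k+\ell$. Suppose $\mathcal F \subset \binom{[n]}{k}$ and $\mathcal G \subset \binom{[2\ell]}{\ell}$ are non-trivial and cross-intersecting. Then $$|\mathcal F| + |\mathcal G| \leq h(n,k,\ell) := \binom{n}{k} - 2\binom{n-\ell}{k} + \binom{n-2\ell}{k} + 2,$$ and the inequality is strict unless $|\mathcal G| = 2$.
   Context: Families are cross-intersecting if every member of one meets every member of the other; a non-empty family is non-trivial if the intersection of all its members is empty. $\binom{[2\ell]}{\ell}$ is the set of $\ell$-subsets of $\{1,\dots,2\ell\}$. *)

(* Defs.v *)
From mathcomp Require Import all_boot all_order all_algebra.
Set Implicit Arguments. Unset Strict Implicit. Unset Printing Implicit Defensive.

(* Ground set [n] is modelled as 'I_n = {0,...,n-1}. *)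

Definition cross_intersecting (T : finType) (F G : {set {set T}}) : Prop :=
  forall A B, A \in F -> B \in G -> A :&: B != set0.

Definition nontrivial (T : finType) (F : {set {set T}}) : Prop :=
  F != set0 /\ \bigcap_(A in F) A = set0.

Definition k_uniform (T : finType) (k : nat) (F : {set {set T}}) : Prop :=
  forall A, A \in F -> #|A| = k.

Definition initseg (n m : nat) : {set 'I_n} := [set i : 'I_n | i < m].

(* Main.v *)
Require Import Defs.
From mathcomp Require Import all_boot all_order all_algebra.
From mathcomp Require Import zify ring.
Import GRing.Theory Num.Theory.
Set Implicit Arguments. Unset Strict Implicit. Unset Printing Implicit Defensive.

Section Gen.
Variable T : finType.
Implicit Types (A S W Z : {set T}).

Definition ksub S k := [set A : {set T} | A \subset S & #|A| == k].

Lemma card_ksub S k : #|ksub S k| = 'C(#|S|, k).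
Proof. exact: cards_draws. Qed.

Definition ksubb S k b := [set A in ksub S k | b \in A].

Lemma card_ksubb S k b : b \in S -> #|ksubb S k b| + 'C(#|S|.-1, k) = 'C(#|S|, k).
Proof.
move=> bS.
have E1 : ksubb S k b = ksub S k :&: [set A : {set T} | b \in A].
  by apply/setP => A; rewrite !inE.
have E2 : ksub (S :\ b) k = ksub S k :\: [set A : {set T} | b \in A].
  apply/setP => A; rewrite !inE; apply/idP/idP.
    case/andP => sA ->; rewrite andbT; apply/andP; split.
      by apply/negP => bA; move/subsetP: sA => /(_ b bA); rewrite !inE eqxx.
    by apply: subset_trans sA (subsetDl _ _).
  case/and3P => nb sA ->; rewrite andbT; apply/subsetP => x xA; rewrite !inE.
  rewrite (subsetP sA) // andbT; apply/eqP => exb; by rewrite -exb xA in nb.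
have E3 : #|S|.-1 = #|S :\ b| by rewrite [in LHS](cardsD1 b) bS.
by rewrite E1 E3 -!card_ksub E2 cardsID.
Qed.

Lemma exists_sub W s : s <= #|W| -> exists Z, Z \subset W /\ #|Z| = s.
Proof.
move=> sW; have : 0 < #|ksub W s| by rewrite card_ksub bin_gt0.
by case/card_gt0P => Z; rewrite inE => /andP[? /eqP]; exists Z.
Qed.

Lemma exists_subb W b s : b \in W -> 0 < s <= #|W| ->
  exists Z, [/\ b \in Z, Z \subset W & #|Z| = s].
Proof.
move=> bW /andP[s0 sW].
have [Z0 [sZ0 cZ0]] : exists Z, Z \subset W :\ b /\ #|Z| = s.-1.
  apply: exists_sub; move: sW; rewrite (cardsD1 b W) bW; lia.
exists (b |: Z0); split; first by rewrite setU11.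
  by rewrite subUset sub1set bW (subset_trans sZ0) // subsetDl.
rewrite cardsU1 cZ0.
have -> : b \notin Z0 by apply/negP => /(subsetP sZ0); rewrite !inE eqxx.
lia.
Qed.

Lemma card_disj_le (X1 X2 Y : {set {set T}}) :
  X1 \subset Y -> X2 \subset Y -> [disjoint X1 & X2] -> #|X1| + #|X2| <= #|Y|.
Proof.
move=> s1 s2 d.
have E : #|X1 :|: X2| = #|X1| + #|X2| by rewrite cardsU (disjoint_setI0 d) cards0 subn0.
rewrite -E.
by apply: subset_leq_card; rewrite subUset s1 s2.
Qed.

End Gen.


Lemma ar1 s p l N w cu : s + (l + l - p) = N -> w + cu = N -> cu <= l + (l - p) -> p < l -> s <= w.
Proof. lia. Qed.
Lemma ar2 (b : bool) x l : b + x = l -> 2 <= l -> x != 0.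
Proof. case: b => /=; lia. Qed.
Lemma ar3 s p l N x : s + (l + l - p) = N -> (1 + x) + l = N -> p < l -> s <= x.
Proof. lia. Qed.
Lemma ar4 (b : bool) x c : b + x <= c.+1 -> b -> x <= c.
Proof. case: b => /=; lia. Qed.

Lemma ar5 (b : bool) x l : b + (1 + x) = l -> 3 <= l -> x != 0.
Proof. case: b => /=; lia. Qed.
Lemma ar6 a b c d l N : l + c = N -> l + l - b + d = N -> b + 1 = l -> c = 1 + a -> a = d.
Proof. lia. Qed.
Lemma ar7 a b c d e : a <= c + b -> b <= d -> 1 + c + d <= e -> a + 1 <= e.
Proof. lia. Qed.

Section Main.
Variable T : finType.
Variables (U B : {set T}) (l k : nat) (G G3 : {set {set T}}).
Hypothesis hU : #|U| = l + l.
Hypothesis hBU : B \subset U.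
Hypothesis hB : #|B| = l.
Hypothesis hG : forall C, C \in G -> C \subset U /\ #|C| = l.
Hypothesis hG3 : G3 \subset G.
Hypothesis hl : 2 <= l.
Implicit Types (Bp Z A C W : {set T}) (b x y : T).

Definition NT := [set A : {set T} | (#|A| == k) && [exists C in G, A :&: C == set0]].
Definition Tgt Bp := [set A in NT | [&& A :&: (B :\: Bp) == set0, A :&: Bp != set0 &
    ~~ [exists C in G3, A :&: U == U :\: C]]].
Definition Q Bp := [set A in ksub (~: (U :\: Bp)) k | A :&: Bp != set0].

Lemma Qsplit Bp b : b \in Bp ->
  Q Bp \subset ksubb (~: (U :\: Bp)) k b :|: Q (Bp :\ b).
Proof.
move=> bBp; apply/subsetP => A; rewrite !inE => /andP[/andP[sA cA] mA].
rewrite sA cA /=; case bA: (b \in A) => //=.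
rewrite andbT; apply/andP; split.
  apply/subsetP => x xA; move/subsetP: sA => /(_ x xA); rewrite !inE.
  have hx : x != b by apply/eqP => e; rewrite e bA in xA.
  by rewrite hx.
case/set0Pn: mA => x; rewrite !inE => /andP[xA xB]; apply/set0Pn; exists x.
rewrite !inE xA xB andbT; apply/eqP => exb; by rewrite exb bA in xA.
Qed.


Lemma Geq C C' A : C \in G -> C' \in G -> U :\: C \subset A -> A :&: C' == set0 -> C = C'.
Proof.
move=> CG C'G sUA /eqP dA.
have [sCU cC] := hG CG; have [sC'U cC'] := hG C'G.
suff sC'C : C' \subset C by apply/eqP; rewrite eq_sym eqEcard sC'C cC cC' leqnn.
apply/subsetP => x xC'; apply/negPn/negP => xC.
have xA : x \in A by apply: (subsetP sUA); rewrite !inE xC (subsetP sC'U).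
by move/setP: dA => /(_ x); rewrite !inE xA xC'.
Qed.

Lemma Tstep Bp b C Z : b \in Bp -> C \in G -> b \notin C ->
  Z \subset ~: (C :|: (B :\: Bp)) -> (C \notin G3) || ~~ (U :\: C \subset Z) ->
  ksubb Z k b \subset Tgt Bp.
Proof.
move=> bBp CG bC sZ hC; apply/subsetP => A; rewrite !inE => /andP[/andP[sA cA] bA].
have sAW := subset_trans sA sZ.
have dAC : A :&: C == set0.
  apply/eqP/setP => x; rewrite !inE; apply/negP => /andP[xA xC].
  by move/subsetP: sAW => /(_ x xA); rewrite !inE xC.
rewrite cA /=; apply/and4P; split.
- by apply/existsP; exists C; rewrite CG.
- apply/eqP/setP => x; rewrite !inE; apply/negP => /and3P[xA xBp xB].
  by move/subsetP: sAW => /(_ x xA); rewrite !inE xBp xB orbT.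
- by apply/set0Pn; exists b; rewrite inE bA.
apply/negP => /existsP[C' /andP[C'G3 /eqP eA]].
have C'G := subsetP hG3 _ C'G3.
have e : C' = C by apply: (Geq C'G CG _ dAC); rewrite -eA subsetIl.
move: hC; rewrite -e C'G3 /= => /negP; apply.
by apply: subset_trans sA; rewrite -eA subsetIl.
Qed.

Lemma Tsub Bp b : Tgt (Bp :\ b) \subset Tgt Bp.
Proof.
apply/subsetP => A; rewrite !inE => /andP[->] /and3P[d1 d2 ->].
rewrite /=; apply/andP; split; last rewrite andbT.
  apply/eqP/setP => x; rewrite !inE; apply/negP => /and3P[xA xBp xB].
  move/eqP/setP: d1 => /(_ x); rewrite !inE xA xB.
  by rewrite (negbTE xBp) andbF.
case/set0Pn: d2 => x; rewrite !inE => /and3P[xA _ xBp].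
by apply/set0Pn; exists x; rewrite !inE xA xBp.
Qed.

Lemma Tdisj Z Bp b : b \in B -> [disjoint ksubb Z k b & Tgt (Bp :\ b)].
Proof.
move=> bB; rewrite -setI_eq0; apply/eqP/setP => A; rewrite !inE.
apply/negP => /andP[/andP[_ bA] /andP[_ /andP[/eqP/setP/(_ b) d _]]].
by move: d; rewrite !inE bA bB eqxx.
Qed.


Lemma card_setU_le (X1 X2 : {set {set T}}) : #|X1 :|: X2| <= #|X1| + #|X2|.
Proof. by rewrite cardsU leq_subr. Qed.

Lemma cardU_le (X1 X2 : {set T}) : #|X1 :|: X2| <= #|X1| + #|X2|.
Proof. by rewrite cardsU leq_subr. Qed.

Hypothesis hcov : forall b, b \in B -> exists2 C, C \in G & b \notin C.

Lemma Qstep Bp b Z : b \in Bp -> b \in Z -> #|Z| = #|~: (U :\: Bp)| ->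
  #|Q Bp| <= #|ksubb Z k b| + #|Q (Bp :\ b)|.
Proof.
move=> bBp bZ cZ.
have b1 : b \in ~: (U :\: Bp) by rewrite !inE bBp.
have e : #|ksubb Z k b| = #|ksubb (~: (U :\: Bp)) k b|.
  have := card_ksubb k bZ; have := card_ksubb k b1; rewrite cZ; lia.
rewrite e; apply: leq_trans (card_setU_le _ _).
by apply: subset_leq_card; apply: Qsplit.
Qed.

Lemma L c : forall Bp, #|Bp| <= c -> Bp \subset B -> Bp != B -> #|Q Bp| <= #|Tgt Bp|.
Proof.
elim: c => [|c IH] Bp cBp sBp nBp.
  have -> : Bp = set0 by apply/eqP; rewrite -cards_eq0 -leqn0.
  have -> : Q set0 = set0 by apply/setP => A; rewrite !inE setI0 eqxx andbF.
  by rewrite cards0.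
case: (set_0Vmem Bp) => [-> | [b bBp]].
  have -> : Q set0 = set0 by apply/setP => A; rewrite !inE setI0 eqxx andbF.
  by rewrite cards0.
have bB := subsetP sBp _ bBp.
have [C CG bC] := hcov bB.
have [sCU cC] := hG CG.
set W := ~: (C :|: (B :\: Bp)).
set s := #|~: (U :\: Bp)|.
have sBpU : Bp \subset U := subset_trans sBp hBU.
have hs : s + (l + l - #|Bp|) = #|T|.
  by rewrite /s -(cardsC (U :\: Bp)) cardsDS // hU addnC.
have hBpl : #|Bp| < l.
  by rewrite -hB; apply: proper_card; rewrite properEneq nBp sBp.
have hUT : #|U| <= #|T| := max_card _.
have hW : #|W| + #|C :|: (B :\: Bp)| = #|T| by rewrite addnC cardsC.
have hCB : #|C :|: (B :\: Bp)| <= l + (l - #|Bp|).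
  by apply: leq_trans (cardU_le _ _) _; rewrite cardsDS // cC hB.
have bW : b \in W by rewrite !inE bBp (negbTE bC).
have [Z [bZ sZW cZ nUZ]] : exists Z, [/\ b \in Z, Z \subset W, #|Z| = s &
    ~~ (U :\: C \subset Z)].
  case: (boolP (U :\: C \subset W)) => hUW; last first.
    have [|Z [bZ sZ cZ]] := exists_subb bW (s := s).
      apply/andP; split; last exact: ar1 hs hW hCB hBpl.
      by rewrite /s card_gt0; apply/set0Pn; exists b; rewrite !inE bBp.
    exists Z; split => //; apply/negP => sUZ; move/negP: hUW; apply.
    exact: subset_trans sUZ sZ.
  have sBC : B :\: Bp \subset C.
    apply/subsetP => x xB; apply/negPn/negP => xC.
    have : x \in U :\: C by rewrite !inE xC (subsetP hBU) //; move: xB; rewrite !inE => /andP[].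
    by move/(subsetP hUW); rewrite in_setC in_setU xB orbT.
  have eW : C :|: (B :\: Bp) = C by apply/setUidPl.
  have cUC : #|U :\: C| = l by rewrite cardsDS // cC hU addnK.
  have [y yU] : exists y, y \in (U :\: C) :\ b.
    apply/set0Pn; rewrite -cards_eq0; move: cUC; rewrite (cardsD1 b (U :\: C)) => /ar2; exact.
  have yW : y \in W by apply: (subsetP hUW); move: yU; rewrite inE => /andP[].
  have bWy : b \in W :\ y.
    rewrite in_setD1 bW andbT; apply/eqP => eyb; by move: yU; rewrite eyb !inE eqxx.
  have [|Z [bZ sZ cZ]] := exists_subb bWy (s := s).
    apply/andP; split.
      by rewrite /s card_gt0; apply/set0Pn; exists b; rewrite !inE bBp.
    move: hW; rewrite eW cC (cardsD1 y W) yW => hW; exact: ar3 hs hW hBpl.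
  exists Z; split => //.
    by apply: subset_trans sZ (subsetDl _ _).
  apply/negP => /subsetP /(_ y) h.
  have : y \in Z by apply: h; move: yU; rewrite inE => /andP[].
  by move/(subsetP sZ); rewrite !inE eqxx.
apply: leq_trans (Qstep bBp bZ cZ) _.
have sBpb : Bp :\ b \subset B by apply: subset_trans sBp; apply: subsetDl.
have nBpb : Bp :\ b != B by apply/eqP => e; move: bB; rewrite -e !inE eqxx.
have cBpb : #|Bp :\ b| <= c by move: cBp; rewrite (cardsD1 b Bp) => /ar4; apply.
apply: leq_trans (leq_add (leqnn _) (IH _ cBpb sBpb nBpb)) _.
apply: card_disj_le; last exact: Tdisj.
  apply: Tstep bBp CG bC sZW _; by rewrite nUZ orbT.
exact: Tsub.
Qed.


Lemma Ltop b1 C1 e : b1 \in B -> C1 \in G -> b1 \notin C1 -> C1 \notin G3 ->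
  #|Q (B :\ b1)| + e <= #|Tgt (B :\ b1)| -> #|Q B| + e <= #|Tgt B|.
Proof.
move=> b1B C1G b1C1 C1G3 h.
have [sC1U cC1] := hG C1G.
have cZ : #|~: C1| = #|~: (U :\: B)|.
  have := cardsC C1; have := cardsC (U :\: B); rewrite cardsDS // hU hB cC1 addnK.
  by move=> h1 h2; apply/eqP; rewrite -(eqn_add2l l) h1 h2.
have b1Z : b1 \in ~: C1 by rewrite inE.
have bB : b1 \in B := b1B.
apply: leq_trans (leq_add (Qstep bB b1Z cZ) (leqnn e)) _.
rewrite -addnA; apply: leq_trans (leq_add (leqnn _) h) _.
apply: card_disj_le; last exact: Tdisj.
  apply: Tstep bB C1G b1C1 _ _; last by rewrite C1G3.
  by rewrite setDv setU0.
exact: Tsub.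
Qed.

Lemma Lnonstrict b1 C1 : b1 \in B -> C1 \in G -> b1 \notin C1 -> C1 \notin G3 ->
  #|Q B| <= #|Tgt B|.
Proof.
move=> b1B C1G b1C1 C1G3; rewrite -[#|Q B|]addn0.
apply: (Ltop b1B C1G b1C1 C1G3); rewrite addn0.
apply: (L (leqnn _)); first exact: subsetDl.
by apply/eqP => e; move: b1B; rewrite -e !inE eqxx.
Qed.


Lemma Lstrict b1 b2 C' r : k = l -> 3 <= l -> b1 \in B -> b2 \in B -> C' \in G ->
  b1 \in C' -> b2 \notin C' -> r \notin U ->
  #|Q (B :\ b1)| + 1 <= #|Tgt (B :\ b1)|.
Proof.
move=> kl l3 b1B b2B C'G b1C' b2C' rU.
have [sC'U cC'] := hG C'G.
set Bp := B :\ b1.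
have b21 : b2 != b1 by apply/eqP => e; move: b2C'; rewrite e b1C'.
have b2Bp : b2 \in Bp by rewrite !inE b21 b2B.
have cUC : #|U :\: C'| = l by rewrite cardsDS // cC' hU addnK.
have [z zU] : exists z, z \in (U :\: C') :\ b2.
  apply/set0Pn; rewrite -cards_eq0; move: cUC; rewrite (cardsD1 b2 (U :\: C')) => /ar2.
  by apply; apply: ltnW.
have [y yU] : exists y, y \in ((U :\: C') :\ b2) :\ z.
  apply/set0Pn; rewrite -cards_eq0; move: cUC.
  rewrite (cardsD1 b2 (U :\: C')) (cardsD1 z ((U :\: C') :\ b2)) zU => /ar5.
  by apply.
move: zU yU; rewrite !inE => /and3P[zb2 zC' zUU] /and4P[yz yb2 yC' yUU].
set Z := ~: C' :\ z.
have b2Z : b2 \in Z by rewrite !inE b2C' andbT; rewrite eq_sym.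
have cZ : #|Z| = #|~: (U :\: Bp)|.
  have sBpU : Bp \subset U by apply: subset_trans hBU; apply: subsetDl.
  have h1 := cardsC C'; have h2 := cardsC (U :\: Bp).
  have h3 : #|Bp| + 1 = l by rewrite -hB (cardsD1 b1 B) b1B addnC.
  have h4 := cardsD1 z (~: C'); rewrite inE zC' /= in h4.
  rewrite cC' in h1; rewrite cardsDS // hU in h2.
  exact: ar6 h1 h2 h3 h4.
have hQ := Qstep b2Bp b2Z cZ.
have sBpb : Bp :\ b2 \subset B by apply: subset_trans (subsetDl _ _) (subsetDl _ _).
have nBpb : Bp :\ b2 != B by apply/eqP => e; move: b2B; rewrite -e !inE eqxx.
have hL := L (leqnn _) sBpb nBpb.
set A2 := ((U :\: C') :\ y) :|: [set r].
have rA2 : r \in A2 by rewrite !inE eqxx orbT.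
have cA2 : #|A2| = k.
  have yUC : y \in U :\: C' by rewrite !inE yC' yUU.
  have c1 := cardsD1 y (U :\: C'); rewrite yUC cUC in c1.
  have rn : (r \in (U :\: C') :\ y) = false by rewrite !inE (negbTE rU) !andbF.
  by rewrite /A2 setUC cardsU1 rn kl c1.
have A2T : A2 \in Tgt Bp.
  rewrite !inE cA2 eqxx /=; apply/and4P; split.
  - apply/existsP; exists C'; rewrite C'G /=; apply/eqP/setP => x; rewrite !inE.
    case xC: (x \in C'); rewrite ?andbF ?andbT /= ?andbF /= //.
    by apply/negbTE/eqP => e; move: rU; rewrite -e (subsetP sC'U).
  - apply/eqP/setP => x; rewrite !inE.
    case xb1 : (x == b1); last first.
      by case: (x \in B); rewrite /= ?andbF.
    rewrite (eqP xb1) b1C' /=.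
    have -> : (b1 == r) = false by apply/negbTE/eqP => e; move: rU; rewrite -e (subsetP hBU).
    by rewrite andbF.
  - apply/set0Pn; exists b2; rewrite !inE b21 b2B b2C' (subsetP hBU) //.
    by rewrite eq_sym yb2.
  - apply/negP => /existsP[C /andP[CG3 /eqP e]].
    have [_ cC] := hG (subsetP hG3 _ CG3).
    have : #|A2 :&: U| < #|A2|.
      apply: proper_card; rewrite properEneq subsetIl andbT.
      apply/eqP => e2; have : r \in A2 :&: U by rewrite e2.
      by rewrite inE (negbTE rU) andbF.
    have [sCU _] := hG (subsetP hG3 _ CG3).
    by rewrite e cA2 cardsDS // hU cC kl addnK ltnn.
have A2n1 : A2 \notin ksubb Z k b2.
  apply/negP; rewrite !inE => /andP[/andP[sA _] _].
  have : z \in A2 by rewrite !inE (eq_sym z y) yz zC' zUU.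
  by move/(subsetP sA); rewrite !inE eqxx.
have A2n2 : A2 \notin Tgt (Bp :\ b2).
  apply/negP; rewrite !inE => /andP[_ /andP[/eqP/setP/(_ b2) d _]].
  move: d; rewrite !inE eqxx b2B /= andbT.
  by rewrite eq_sym yb2 b2C' (subsetP hBU).
have : #|ksubb Z k b2 :|: [set A2]| + #|Tgt (Bp :\ b2)| <= #|Tgt Bp|.
  apply: card_disj_le.
  - rewrite subUset sub1set A2T andbT.
    apply: Tstep b2Bp C'G b2C' _ _.
      apply/subsetP => x; rewrite !inE => /andP[_ xC'].
      have xb : x != b1 by apply/eqP => e; rewrite e b1C' in xC'.
      by rewrite (negbTE xC') xb /=; case: (x \in B).
    apply/orP; right; apply/negP => /subsetP/(_ z).
    by rewrite !inE eqxx zC' zUU => /(_ isT).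
  - exact: Tsub.
  - rewrite -setI_eq0; apply/eqP/setP => A; rewrite in_setI in_setU in_set1 in_set0.
    apply/negP => /andP[/orP[Ak | /eqP ->] AT].
      by have := Tdisj Z Bp b2B; rewrite -setI_eq0 => /eqP/setP/(_ A); rewrite in_setI in_set0 Ak AT.
    by move: A2n2; rewrite AT.
rewrite setUC cardsU1 A2n1 /=.
exact: ar7 hQ hL.
Qed.


Lemma Qcount : #|Q B| + 'C(#|~: U|, k) = 'C(#|~: (U :\: B)|, k).
Proof.
set S := ksub (~: (U :\: B)) k; set D := [set A : {set T} | A :&: B != set0].
have e1 : Q B = S :&: D by apply/setP => A; rewrite !inE.
have e2 : ksub (~: U) k = S :\: D.
  apply/setP => A; rewrite !inE negbK; apply/idP/idP.
    case/andP => sA ->; rewrite andbT; apply/andP; split.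
      apply/eqP/setP => x; rewrite !inE; apply/negP => /andP[xA xB].
      by move/subsetP: sA => /(_ x xA); rewrite inE (subsetP hBU).
    apply: subset_trans sA _; apply/subsetP => x; rewrite !inE => /negbTE ->; by rewrite andbF.
  case/andP => /eqP/setP dA /andP[sA ->]; rewrite andbT.
  apply/subsetP => x xA; move: (dA x) (subsetP sA x xA); rewrite !inE xA /= => -> /=.
  by [].

by rewrite -!card_ksub e1 e2 cardsID.
Qed.

Lemma memUR C (R : {set T}) x : C \subset U -> R \subset ~: U ->
  (x \in (U :\: C) :|: R) = if x \in U then x \notin C else x \in R.
Proof.
move=> sCU sRU; rewrite !inE; case xU: (x \in U); rewrite ?andbT ?andbF /=.
  case xR: (x \in R); rewrite ?orbT ?orbF //.
  by move/subsetP: sRU => /(_ x xR); rewrite inE xU.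
done.
Qed.

Lemma cardU_disj (X1 X2 : {set {set T}}) : [disjoint X1 & X2] -> #|X1 :|: X2| = #|X1| + #|X2|.
Proof. by move=> d; rewrite cardsU (disjoint_setI0 d) cards0 subn0. Qed.

Lemma NTbound : B \in G -> B \notin G3 -> l <= k ->
  #|ksub (~: B) k| + #|Tgt B| + #|G3| * #|ksub (~: U) (k - l)| <= #|NT|.
Proof.
move=> BG BG3 lk.
set RR := ksub (~: U) (k - l).
set P3 := [set (U :\: p.1) :|: p.2 | p in setX G3 RR].
have hinj : {in setX G3 RR &, injective (fun p => (U :\: p.1) :|: p.2)}.
  move=> [C R] [C' R']; rewrite !inE /= => /andP[CG3 RR1] /andP[C'G3 RR2] e.
  have [sCU _] := hG (subsetP hG3 _ CG3); have [sC'U _] := hG (subsetP hG3 _ C'G3).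
  move: RR1 RR2 => /andP[sR _] /andP[sR' _].
  have ex x : (if x \in U then x \notin C else x \in R) =
              (if x \in U then x \notin C' else x \in R').
    by rewrite -(memUR x sCU sR) -(memUR x sC'U sR') e.
  congr pair; apply/setP => x; have := ex x; case xU: (x \in U).
  - by move/negb_inj.
  - have h1 : (x \in C) = false by apply/negP => /(subsetP sCU); rewrite xU.
    have h2 : (x \in C') = false by apply/negP => /(subsetP sC'U); rewrite xU.
    by rewrite h1 h2.
  - have h1 : (x \in R) = false by apply/negP => /(subsetP sR); rewrite inE xU.
    have h2 : (x \in R') = false by apply/negP => /(subsetP sR'); rewrite inE xU.
    by rewrite h1 h2.
  - done.
have cP3 : #|P3| = #|G3| * #|RR| by rewrite card_in_imset // cardsX.
have P3mem A : A \in P3 -> exists C (R : {set T}), [/\ C \in G3, C \subset U, R \subset ~: U, #|R| = k - l &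
    A = (U :\: C) :|: R].
  case/imsetP => [[C R]]; rewrite !inE /= => /andP[CG3 /andP[sR /eqP cR]] ->.
  exists C, R; split => //; by have [] := hG (subsetP hG3 _ CG3).
set P1 := ksub (~: B) k.
have sP1 : P1 \subset NT.
  apply/subsetP => A; rewrite !inE => /andP[sA ->] /=; apply/existsP; exists B.
  rewrite BG /=; apply/eqP/setP => x; rewrite !inE; apply/negP => /andP[xA xB].
  by move/subsetP: sA => /(_ x xA); rewrite inE xB.
have sT : Tgt B \subset NT by apply/subsetP => A; rewrite inE => /andP[].
have sP3 : P3 \subset NT.
  apply/subsetP => A /P3mem [C [R [CG3 sCU sR cR ->]]].
  have [_ cC] := hG (subsetP hG3 _ CG3).
  have dCR : (U :\: C) :&: R = set0.
    apply/setP => x; rewrite !inE; apply/negP => /andP[/andP[_ xU] xR].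
    by move/subsetP: sR => /(_ x xR); rewrite inE xU.
  rewrite inE cardsU dCR cards0 subn0 cardsDS // hU cC addnK cR subnKC // eqxx /=.
  apply/existsP; exists C; rewrite (subsetP hG3 _ CG3) /=.
  apply/eqP/setP => x; rewrite in_setI memUR // in_set0.
  case xU: (x \in U); case xC: (x \in C); rewrite ?andbF ?andbT //=.
  by move: xU; rewrite (subsetP sCU x xC).
have d1 : [disjoint P1 & Tgt B].
  rewrite -setI_eq0; apply/eqP/setP => A; rewrite in_setI in_set0.
  apply/negP => /andP[]; rewrite !inE => /andP[sA _] /andP[_ /and3P[_ /set0Pn[x] + _]].
  rewrite inE => /andP[xA xB].
  by move/subsetP: sA => /(_ x xA); rewrite inE xB.
have d2 : [disjoint P1 :|: Tgt B & P3].
  rewrite -setI_eq0; apply/eqP/setP => A; rewrite in_setI in_set0 in_setU.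
  apply/negP => /andP[hA /P3mem [C [R [CG3 sCU sR cR eA]]]].
  have [_ cC] := hG (subsetP hG3 _ CG3).
  have CB : C != B by apply/eqP => e; move: BG3; rewrite -e CG3.
  case/orP: hA.
    rewrite !inE => /andP[sA _].
    have : ~~ (B \subset C).
      apply/negP => sBC; move: CB; rewrite eq_sym; apply/negP/negPn.
      by rewrite eqEcard sBC cC hB leqnn.
    case/subsetPn => x xB xC.
    have : x \in A by rewrite eA memUR // (subsetP hBU x xB).
    by move/(subsetP sA); rewrite inE xB.
  rewrite inE => /andP[_ /and3P[_ _ /negP]]; apply; apply/existsP; exists C.
  rewrite CG3 /=; apply/eqP/setP => x; rewrite eA in_setI memUR // in_setD.
  by case: (x \in U); rewrite ?andbT ?andbF.
rewrite -cP3 -(cardU_disj d1); apply: card_disj_le => //.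
by rewrite subUset sP1 sT.
Qed.

End Main.


Lemma ar9 f nt q t b c gw e a : f + nt <= a -> b + t + gw <= nt -> q + c = b ->
  q + e <= t -> f + 2 * b + e + gw <= a + c.
Proof. lia. Qed.

Lemma ar10 f b e gw g m a c : f + 2 * b + e + gw <= a + c -> m <= g + 2 -> g <= gw ->
  f + m + 2 * b + e <= a + c + 2.
Proof. lia. Qed.

Lemma ar11 f b g w m a c : f + 2 * b + 0 + g * w <= a + c -> m <= g + 2 -> 1 <= g ->
  2 <= w -> f + m + 2 * b < a + c + 2.
Proof.
move=> h1 h2 h3 h4; have h5 : g * 2 <= g * w by apply: leq_mul.
move: h1 h5; move: (g * w) => x; lia.
Qed.

Lemma bin_ge2 N r : 0 < r -> r < N -> 2 <= 'C(N, r).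
Proof.
case: N => // N; case: r => // r _ lt.
rewrite binS; have h1 : 0 < 'C(N, r.+1) by rewrite bin_gt0.
have h2 : 0 < 'C(N, r) by rewrite bin_gt0; apply: ltnW.
lia.
Qed.

Lemma final (T : finType) (n k l : nat) (F G : {set {set T}}) (U : {set T}) :
  #|T| = n -> 2 <= l -> l <= k -> 3 <= k -> k + l < n -> #|U| = l + l ->
  (forall A, A \in F -> #|A| = k) -> (forall A, A \in G -> #|A| = l) ->
  (forall B, B \in G -> B \subset U) ->
  G != set0 -> \bigcap_(A in G) A = set0 ->
  (forall A B, A \in F -> B \in G -> A :&: B != set0) ->
  #|F| + #|G| + 2 * 'C(n - l, k) <= 'C(n, k) + 'C(n - 2 * l, k) + 2 /\
  (#|G| != 2 -> #|F| + #|G| + 2 * 'C(n - l, k) < 'C(n, k) + 'C(n - 2 * l, k) + 2).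
Proof.
move=> cT hl lk k3 kln hU hF hGc hGU /set0Pn [B BG] hcap hcross.
have hB := hGc B BG; have hBU := hGU B BG.
have hG' : forall C, C \in G -> C \subset U /\ #|C| = l.
  by move=> C CG; split; [apply: hGU | apply: hGc].
have hcov : forall b, b \in B -> exists2 C, C \in G & b \notin C.
  move=> b bB; case: (boolP [exists C in G, b \notin C]).
    by case/existsP => C /andP[CG bC]; exists C.
  move/existsPn => h.
  have : b \in \bigcap_(A in G) A.
    by apply/bigcapP => C CG; move: (h C); rewrite CG /= negbK.
  by rewrite hcap inE.
have cUT : #|U| <= n by rewrite -cT max_card.
have cCB : #|~: B| = n - l by move: (cardsC B); rewrite hB cT; clear; lia.
have cCX : #|~: (U :\: B)| = n - l.
  by move: (cardsC (U :\: B)); rewrite cardsDS // hB hU cT; clear; lia.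
have cCU : #|~: U| = n - 2 * l by move: (cardsC U); rewrite hU cT; clear; lia.
have hFNT : #|F| + #|NT k G| <= 'C(n, k).
  rewrite -cT -cardsT -card_ksub; apply: card_disj_le.
  - by apply/subsetP => A AF; rewrite !inE subsetT (hF A AF) eqxx.
  - by apply/subsetP => A; rewrite !inE subsetT => /andP[].
  - rewrite -setI_eq0; apply/eqP/setP => A; rewrite !inE.
    apply/negP => /andP[AF /andP[_ /existsP[C /andP[CG /eqP e]]]].
    by move: (hcross A C AF CG); rewrite e eqxx.
have gen : forall b1 C1 e, b1 \in B -> C1 \in G -> b1 \notin C1 ->
    #|Q U k B| + e <= #|Tgt U B k G (G :\: [set B; C1]) B| ->
    #|F| + 2 * 'C(n - l, k) + e + #|G :\: [set B; C1]| * 'C(n - 2 * l, k - l)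
      <= 'C(n, k) + 'C(n - 2 * l, k).
  move=> b1 C1 e b1B C1G b1C1 hQT.
  set G3 := G :\: [set B; C1].
  have hG3 : G3 \subset G by apply: subsetDl.
  have BG3 : B \notin G3 by rewrite !inE eqxx.
  have hNT := @NTbound T U B l k G G3 hU hBU hB hG' hG3 BG BG3 lk.
  have hQc := @Qcount T U B k hBU.
  rewrite card_ksub cCB card_ksub cCU in hNT; rewrite cCU cCX in hQc.
  exact: ar9 hFNT hNT hQc hQT.
have cGG3 : forall S : {set {set T}}, #|S| <= 2 -> #|G| <= #|G :\: S| + 2.
  move=> S cS; rewrite cardsD; have := subset_leq_card (subsetIr G S).
  move: #|G| #|G :&: S| #|S| cS => x y z; clear; lia.
have c2 : forall C1, #|[set B; C1]| <= 2 by move=> C1; rewrite cards2; case: (B != C1).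
have w1 : 0 < 'C(n - 2 * l, k - l) by rewrite bin_gt0; clear -kln lk; lia.
have [b1 b1B] : exists b1, b1 \in B by apply/card_gt0P; rewrite hB; clear -hl; lia.
have [C1 C1G b1C1] := hcov b1 b1B.
have hG31 : G :\: [set B; C1] \subset G by apply: subsetDl.
have C1G3 : C1 \notin G :\: [set B; C1] by rewrite !inE eqxx orbT.
have hQT0 := @Lnonstrict T U B l k G _ hU hBU hB hG' hG31 hl hcov b1 C1 b1B C1G b1C1 C1G3.
have g0 := gen b1 C1 0 b1B C1G b1C1 ltac:(by rewrite addn0).
have ns : #|F| + #|G| + 2 * 'C(n - l, k) <= 'C(n, k) + 'C(n - 2 * l, k) + 2.
  by have := ar10 g0 (cGG3 _ (c2 C1)) (leq_pmulr _ w1); rewrite addn0.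
split => // nG2.
have mG3 : 3 <= #|G|.
  have m1 : 0 < #|G| by apply/card_gt0P; exists B.
  have m2 : #|G| != 1.
    apply/negP => /cards1P [x ex]; move: hcap; rewrite ex big_set1.
    have -> : x = B by move: BG; rewrite ex inE => /eqP.
    by move=> e0; move: hB; rewrite e0 cards0; clear -hl; lia.
  move: m1 m2 nG2; move: #|G| => x; clear; lia.
have gge : 1 <= #|G :\: [set B; C1]| by have := cGG3 _ (c2 C1); clear -mG3; move: #|G| (#|G :\: _|) mG3 => x y; lia.
case: (ltnP l k) => [lk' | kl0]; last first.
  have kl : l = k by apply/eqP; rewrite eqn_leq lk kl0.
-
  set X := U :\: B.
  have [C' C'G'] : exists C', C' \in G :\: [set B; X].
    apply/card_gt0P; have := cGG3 [set B; X] (c2 X); clear -mG3; move: #|G| (#|G :\: _|) mG3 => x y; lia.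
  move: C'G'; rewrite !inE negb_or => /andP[/andP[C'B C'X] C'G].
  have [sC'U cC'] := hG' C' C'G.
  have [b1' b1'I] : exists b, b \in C' :&: B.
    apply/set0Pn; apply/negP => /eqP dI; move/negP: C'X; apply.
    rewrite eqEcard cC' /X cardsDS // hU hB addnK leqnn andbT.
    apply/subsetP => x xC; rewrite !inE (subsetP sC'U x xC) andbT.
    by apply/negP => xB; move/setP: dI => /(_ x); rewrite !inE xC xB.
  move: b1'I; rewrite inE => /andP[b1C' b1B'].
  have [b2 b2B b2C'] : exists2 b, b \in B & b \notin C'.
    apply/subsetPn; apply/negP => sBC; move/negP: C'B; apply.
    by rewrite eq_sym eqEcard sBC cC' hB leqnn.
  have [C1' C1'G b1C1'] := hcov b1' b1B'.
  have hG32 : G :\: [set B; C1'] \subset G by apply: subsetDl.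
  have C1'G3 : C1' \notin G :\: [set B; C1'] by rewrite !inE eqxx orbT.
  have [r rU] : exists r, r \in ~: U by apply/card_gt0P; rewrite cCU; clear -kln lk; lia.
  rewrite inE in rU.
  have hs := @Lstrict T U B l k G _ hU hBU hB hG' hG32 hl hcov b1' b2 C' r
    (esym kl) ltac:(clear -kl k3; lia) b1B' b2B C'G b1C' b2C' rU.
  have ht := @Ltop T U B l k G _ hU hBU hB hG' hG32 hl b1' C1' 1 b1B' C1'G b1C1' C1'G3 hs.
  have g1 := gen b1' C1' 1 b1B' C1'G b1C1' ht.
  have := ar10 (e := 1) (m := #|G|) (g := #|G :\: [set B; C1']|) g1.
  move=> h; have {}h := h (cGG3 _ (c2 C1')) (leq_pmulr _ w1).
  move: h; rewrite addn1 !addnS ltnS; by [].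
-
  have w2 : 2 <= 'C(n - 2 * l, k - l) by apply: bin_ge2; clear -kln lk'; lia.
  exact: ar11 g0 (cGG3 _ (c2 C1)) gge w2.
Qed.

Unset Implicit Arguments.
Local Open Scope ring_scope.

Lemma card_initseg n m : (m <= n)%N -> #|initseg n m| = m.
Proof.
move=> H.
have -> : initseg n m = widen_ord H @: [set: 'I_m].
  apply/setP => i; rewrite inE; apply/idP/imsetP.
    by move=> im; exists (Ordinal im) => //; apply: val_inj.
  by case=> j _ ->; rewrite /= ltn_ord.
by rewrite card_imset ?cardsT ?card_ord //; by move=> a b /(congr1 val) /= e; apply: val_inj.
Qed.

Theorem proposition4p3 (n k l : nat) (F G : {set {set 'I_n}}) :
  (2 <= l)%N -> (l <= k)%N -> (3 <= k)%N -> (k + l < n)%N ->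
  k_uniform k F ->
  k_uniform l G -> (forall B, B \in G -> B \subset initseg n (2 * l)) ->
  nontrivial F -> nontrivial G -> cross_intersecting F G ->
  ((#|F| + #|G|)%:Z <=
     ('C(n, k))%:Z - 2 * ('C(n - l, k))%:Z + ('C(n - 2 * l, k))%:Z + 2)
  /\ ((#|G| != 2)%N ->
     (#|F| + #|G|)%:Z <
     ('C(n, k))%:Z - 2 * ('C(n - l, k))%:Z + ('C(n - 2 * l, k))%:Z + 2).
Proof.
move=> hl lk k3 kln hF hG hGU _ [G0 hcap] hcross.
have hU : #|initseg n (2 * l)| = (l + l)%N.
  by rewrite card_initseg; [rewrite mul2n addnn | clear -kln lk; lia].
have [h1 h2] := final (card_ord n) hl lk k3 kln hU hF hG hGU G0 hcap hcross.
have E : ('C(n, k))%:Z - 2 * ('C(n - l, k))%:Z + ('C(n - 2 * l, k))%:Z + 2 =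
    ('C(n, k) + 'C(n - 2 * l, k) + 2)%N%:Z - (2 * 'C(n - l, k))%N%:Z.
  rewrite !PoszD; ring.
rewrite E; split.
  by rewrite lerBrDr -!PoszD lez_nat.
by move=> /h2; rewrite ltrBrDr -!PoszD ltz_nat.
Qed.
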